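(* Let $\sigma^2>0$, $\gamma>0$, and let $n\ge 1$ be an integer. Let $\mathbf{H}'\in\mathbb{C}^{N_R\times M}$ and let $L$ be a positive integer with $L\le \operatorname{rank}(\mathbf{H}')$. Let $\lambda_{H'}(1)\ge\cdots\ge\lambda_{H'}(L)>0$ be the $L$ largest eigenvalues of $\mathbf{H}'^H\mathbf{H}'$, and let $\mathbf{V}^{(1)}\in\mathbb{C}^{M\times L}$ be a matrix whose orthonormal columns are corresponding right singular vectors of $\mathbf{H}'$ (i.e. corresponding unit-norm eigenvectors of $\mathbf{H}'^H\mathbf{H}'$). Consider the problem $$\min_{\mathbf{U}\in\mathbb{C}^{M\times L}} \operatorname{tr}\{\mathbf{U}^H\mathbf{U}\}\quad\text{subject to}\quad \mathbf{U}^H\mathbf{H}'^H\mathbf{H}'\mathbf{U}\ \text{invertible and}\ \sum_{\ell=1}^{L}\sigma^2\Big[\big(\mathbf{U}^H\mathbf{H}'^H\mathbf{H}'\mathbf{U}\big)^{-1}\Big]_{\ell,\ell}\le \frac{\gamma}{n}.$$ Define, for $\ell=1,\dots,L$, $$\lambda_{U}(\ell)=\sqrt{\nu\,\frac{\sigma^2}{\lambda_{H'}(\ell)}},$$ where $\nu>0$ is the (unique) constant such that $\sum_{\ell=1}^{L}\frac{\sigma^2}{\lambda_U(\ell)\,\lambda_{H'}(\ell)}=\frac{\gamma}{n}$, and let $\boldsymbol{\Lambda}_U=\operatorname{diag}(\lambda_U(1),\dots,\lambda_U(L))$. Then for every unitary $\mathbf{S}\in\mathbb{C}^{L\times L}$,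 the matrix $$\mathbf{U}=\mathbf{V}^{(1)}\boldsymbol{\Lambda}_U^{1/2}\mathbf{S}^H$$ is an optimal solution of the problem, and the optimal value equals $\sum_{\ell=1}^{L}\lambda_U(\ell)$. Moreover, $\mathbf{S}$ can be chosen so that every term satisfies $\sigma^2\big[(\mathbf{U}^H\mathbf{H}'^H\mathbf{H}'\mathbf{U})^{-1}\big]_{\ell,\ell}=\epsilon$ for all $\ell=1,\dots,L$, where $\epsilon=\frac{1}{L}\frac{\gamma}{n}$.
   Context: This is the per-subcarrier, per-user power-minimization problem arising in a zero-forcing transceiver design: $\mathbf{H}'$ plays the role of the equivalent channel matrix of a user on a subcarrier, $\mathbf{U}$ is the transmit precoding matrix, $\operatorname{tr}\{\mathbf{U}^H\mathbf{U}\}$ is (proportional to) the transmit power, and the quantities $\sigma^2[(\mathbf{U}^H\mathbf{H}'^H\mathbf{H}'\mathbf{U})^{-1}]_{\ell,\ell}$ are the mean-square errors of the $L$ data streams under the zero-forcing receiver $\mathbf{G}=(\mathbf{U}^H\mathbf{H}'^H\mathbf{H}'\mathbf{U})^{-1}\mathbf{U}^H\mathbf{H}'^H$. $[\mathbf{A}]_{\ell,\ell}$ denotes the $(\ell,\ell)$ entry of $\mathbf{A}$; $^H$ denotes conjugate transpose; $\boldsymbol{\Lambda}_U^{1/2}$ is the diagonal matrix with entries $\sqrt{\lambda_U(\ell)}$. *)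

(* Defs.v *)
(* Complex scalars: an arbitrary numClosedFieldType C
   (e.g. algC); "real" quantities are elements of C that are real. *)
From HB Require Import structures.
From mathcomp Require Import all_boot all_order all_algebra.
Set Implicit Arguments. Unset Strict Implicit. Unset Printing Implicit Defensive.
Import Order.TTheory GRing.Theory Num.Theory.
Local Open Scope ring_scope.

Definition herm (C : numClosedFieldType) (m n : nat) (A : 'M[C]_(m, n)) : 'M[C]_(n, m) :=
  (map_mx Num.conj A)^T.

Definition unitary (C : numClosedFieldType) (n : nat) (S : 'M[C]_n) : Prop :=
  herm S *m S = 1%:M.

Definition diagf (C : numClosedFieldType) (n : nat) (d : 'I_n -> C) : 'M[C]_n :=
  diag_mx (\row_i d i).

Definition feasible (C : numClosedFieldType) (NR M L : nat) (sigma2 bound : C)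
  (H : 'M[C]_(NR, M)) (U : 'M[C]_(M, L)) : Prop :=
  let G := herm U *m herm H *m H *m U in
  G \in unitmx /\ \sum_(l < L) sigma2 * (invmx G) l l <= bound.

(* Main.v *)
Require Import Defs.
From HB Require Import structures.
From mathcomp Require Import all_boot all_order all_algebra.
From mathcomp Require Import ring separable cyclic cyclotomic.
Import Order.TTheory GRing.Theory Num.Theory.
Local Open Scope ring_scope.

Set Implicit Arguments. Unset Strict Implicit. Unset Printing Implicit Defensive.

Section Herm.
Variable C : numClosedFieldType.

Lemma hermE m n (A : 'M[C]_(m, n)) i j : herm A i j = (A j i)^*.
Proof. by rewrite /herm !mxE. Qed.

Lemma herm_mul m n p (A : 'M[C]_(m, n)) (B : 'M[C]_(n, p)) :
  herm (A *m B) = herm B *m herm A.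
Proof. by rewrite /herm map_mxM trmx_mul. Qed.

Lemma hermK m n (A : 'M[C]_(m, n)) : herm (herm A) = A.
Proof. by apply/matrixP=> i j; rewrite !hermE conjCK. Qed.

Lemma herm_inv n (A : 'M[C]_n) : herm (invmx A) = invmx (herm A).
Proof. by rewrite /herm map_invmx trmx_inv. Qed.

Lemma herm_add m n (A B : 'M[C]_(m, n)) : herm (A + B) = herm A + herm B.
Proof. by apply/matrixP=> i j; rewrite !(hermE, mxE) rmorphD. Qed.

Lemma herm_opp m n (A : 'M[C]_(m, n)) : herm (- A) = - herm A.
Proof. by apply/matrixP=> i j; rewrite !(hermE, mxE) rmorphN. Qed.

Lemma herm_scale m n (a : C) (A : 'M[C]_(m, n)) : herm (a *: A) = a^* *: herm A.
Proof. by apply/matrixP=> i j; rewrite !(hermE, mxE) rmorphM. Qed.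

Lemma diagfE n (d : 'I_n -> C) i j : diagf d i j = d i *+ (i == j).
Proof. by rewrite /diagf !mxE. Qed.

Lemma herm_diagf n (d : 'I_n -> C) : herm (diagf d) = diagf (fun i => (d i)^*).
Proof.
apply/matrixP=> i j; rewrite hermE !diagfE eq_sym.
by case: eqP => [->|_]; rewrite ?mulr1n ?mulr0n ?rmorph0.
Qed.

Lemma diagf_mul n (d e : 'I_n -> C) : diagf d *m diagf e = diagf (fun i => d i * e i).
Proof. by rewrite /diagf mulmx_diag; congr diag_mx; apply/rowP=> i; rewrite !mxE. Qed.

Lemma mul_diagf m n (d : 'I_m -> C) (A : 'M[C]_(m, n)) i j :
  (diagf d *m A) i j = d i * A i j.
Proof. by rewrite /diagf mul_diag_mx mxE mxE. Qed.

Lemma tr_diagf_mul n (d : 'I_n -> C) (A : 'M[C]_n) :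
  \tr (diagf d *m A) = \sum_i d i * A i i.
Proof. by rewrite /mxtrace; apply: eq_bigr => i _; rewrite mul_diagf. Qed.

Lemma tr_herm_ge0 m n (Z : 'M[C]_(m, n)) : 0 <= \tr (herm Z *m Z).
Proof.
rewrite /mxtrace; apply: sumr_ge0 => i _; rewrite mxE; apply: sumr_ge0 => j _.
by rewrite hermE mulrC mul_conjC_ge0.
Qed.

Lemma unitary_sym n (V : 'M[C]_n) : unitary V -> V *m herm V = 1%:M.
Proof. by move=> h; apply: mulmx1C. Qed.

Lemma eq_diagf n (d e : 'I_n -> C) : (forall i, d i = e i) -> diagf d = diagf e.
Proof. by move=> h; rewrite /diagf; congr diag_mx; apply/rowP=> i; rewrite !mxE. Qed.

End Herm.

Section Key.
Variable C : numClosedFieldType.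

Lemma key_id m L (W : 'M[C]_(m, L)) (d : 'I_m -> C) (t : C) :
  (forall k, 0 <= d k) -> t^* = t ->
  herm W *m diagf d *m W \in unitmx ->
  let G := herm W *m diagf d *m W in
  let Gi := invmx G in
  let R := diagf (fun k => sqrtC (d k)) in
  let Z := W - t *: (R *m W *m Gi) in
  \tr (herm W *m W) = \tr (herm Z *m Z)
     + 2%:R * t * \tr (R *m (W *m Gi *m herm W)) - t ^+ 2 * \tr Gi.
Proof.
move=> d0 tr Gu G Gi R Z.
have hR : herm R = R.
  rewrite /R herm_diagf; apply: eq_diagf => k.
  by apply: conj_Creal; apply: sqrtC_real.
have RR : R *m R = diagf d.
  rewrite /R diagf_mul; apply: eq_diagf => k; by rewrite -expr2 sqrtCK.
have hG : herm G = G.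
  rewrite /G !herm_mul hermK herm_diagf mulmxA; congr (_ *m _ *m _).
  apply: eq_diagf => k; exact: conj_Creal (ger0_real (d0 k)).
have hGi : herm Gi = Gi by rewrite /Gi herm_inv hG.
have GGi : Gi *m G = 1%:M by rewrite /Gi mulVmx.
have hZ : herm Z = herm W - t *: (Gi *m herm W *m R).
  by rewrite /Z herm_add herm_opp herm_scale tr !herm_mul hGi hR mulmxA.
rewrite hZ /Z mulmxBl !mulmxBr !raddfB /=.
rewrite -!scalemxAl -!scalemxAr !scalerA !linearZ /=.
set X := \tr (R *m (W *m Gi *m herm W)).
have e1 : \tr (herm W *m (R *m W *m Gi)) = X.
  by rewrite /X mxtrace_mulC !mulmxA.
have e2 : \tr (Gi *m herm W *m R *m W) = X.
  by rewrite /X mxtrace_mulC !mulmxA mxtrace_mulC !mulmxA.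
have e3 : Gi *m herm W *m R *m (R *m W *m Gi) = Gi.
  rewrite !mulmxA -(mulmxA _ R R) RR.
  have -> : Gi *m herm W *m diagf d *m W = Gi *m G by rewrite /G !mulmxA.
  by rewrite GGi mul1mx.
rewrite e1 e2 e3; ring.
Qed.
End Key.

Section W.
Variable C : numClosedFieldType.

Lemma sum_ltL m L : (L <= m)%N ->
  \sum_(k < m) ((k < L)%N%:R : C) = L%:R.
Proof.
move=> Lm.
rewrite (eq_bigr (fun k : 'I_m => if (k < L)%N then (1 : C) else 0)); last first.
  by move=> k _; case: ifP.
rewrite -big_mkcond /= (big_ord_narrow Lm) /=.
by rewrite sumr_const card_ord.
Qed.

Lemma weighted m L (d tau : 'I_m -> C) (k0 : 'I_m) :
  (forall k, 0 <= d k) -> (forall i j : 'I_m, (i <= j)%N -> d j <= d i) ->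
  (forall k : 'I_m, (k < L)%N -> 0 < d k) ->
  val k0 = L.-1 -> (0 < L)%N -> (L <= m)%N ->
  (forall k, 0 <= tau k) -> (forall k, d k * tau k <= 1) ->
  \sum_k d k * tau k = L%:R ->
  \sum_(k < m | (k < L)%N) (sqrtC (d k))^-1 <= \sum_k sqrtC (d k) * tau k.
Proof.
move=> d0 dec dpos k0v L0 Lm t0 t1 sL.
have k0L : (k0 < L)%N by rewrite k0v prednK.
set r := sqrtC (d k0).
have r0 : 0 < r by rewrite sqrtC_gt0 dpos.
have term : forall k : 'I_m, (d k * tau k - (k < L)%N%:R) / r <=
    sqrtC (d k) * tau k - (if (k < L)%N then (sqrtC (d k))^-1 else 0).
  move=> k; set s := sqrtC (d k).
  have ds : d k = s ^+ 2 by rewrite sqrtCK.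
  have s0 : 0 <= s by rewrite sqrtC_ge0.
  have srl : (k < L)%N -> r <= s.
      by move=> kL; rewrite ler_sqrtC ?nnegrE ?d0 //; apply: dec; rewrite k0v -ltnS prednK.
  have srg : ~~ (k < L)%N -> s <= r.
    move=> kL; rewrite ler_sqrtC ?nnegrE ?d0 //; apply: dec; rewrite k0v.
    by rewrite -ltnS prednK //; apply: leq_trans (leqnSn k); rewrite leqNgt.
  clearbody s; rewrite ds.
  case: ifP => kL.
    have sr := srl kL.
    have sp : 0 < s by apply: lt_le_trans sr.
    rewrite -subr_ge0.
    have -> : s * tau k - s^-1 - (s ^+ 2 * tau k - 1%:R) / r =
       (1 - s ^+ 2 * tau k) * (s - r) / (r * s).
      field.
      by apply/andP; split; rewrite gt_eqF.
    apply: divr_ge0; last by apply: mulr_ge0; apply: ltW.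
    by apply: mulr_ge0; rewrite subr_ge0 // -ds.
  have sr : s <= r by apply: srg; rewrite kL.
  rewrite -subr_ge0.
  have -> : s * tau k - 0 - (s ^+ 2 * tau k - 0%:R) / r =
       s * tau k * (r - s) / r.
    field.
    by rewrite gt_eqF.
  apply: divr_ge0; last by apply: ltW.
  by apply: mulr_ge0; [apply: mulr_ge0 | rewrite subr_ge0].
rewrite big_mkcond /= -subr_ge0 -sumrB.
apply: le_trans (ler_sum _ (fun k _ => term k)).
by rewrite -mulr_suml sumrB sL sum_ltL // subrr mul0r.
Qed.

End W.

Section O.
Variable C : numClosedFieldType.

Lemma optW m L (W : 'M[C]_(m, L)) (d : 'I_m -> C) (k0 : 'I_m) (t : C) :
  (forall k, 0 <= d k) -> (forall i j : 'I_m, (i <= j)%N -> d j <= d i) ->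
  (forall k : 'I_m, (k < L)%N -> 0 < d k) ->
  val k0 = L.-1 -> (0 < L)%N -> (L <= m)%N -> 0 <= t ->
  herm W *m diagf d *m W \in unitmx ->
  2%:R * t * \sum_(k < m | (k < L)%N) (sqrtC (d k))^-1
    - t ^+ 2 * \tr (invmx (herm W *m diagf d *m W)) <= \tr (herm W *m W).
Proof.
move=> d0 dec dpos k0v L0 Lm t0 Gu.
have tr : t^* = t by apply: conj_Creal; apply: ger0_real.
rewrite (key_id d0 tr Gu) /=.
set G := herm W *m diagf d *m W.
set Gi := invmx G.
set T := W *m Gi *m herm W.
have hG : herm G = G.
  rewrite /G !herm_mul hermK herm_diagf mulmxA; congr (_ *m _ *m _).
  apply: eq_diagf => k; exact: conj_Creal (ger0_real (d0 k)).
have hGi : herm Gi = Gi by rewrite /Gi herm_inv hG.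
have GGi : Gi *m G = 1%:M by rewrite /Gi mulVmx.
have hT : herm T = T by rewrite /T !herm_mul hermK hGi mulmxA.
have TDT : T *m diagf d *m T = T.
  have -> : T *m diagf d *m T = W *m Gi *m (herm W *m diagf d *m W) *m Gi *m herm W.
    by rewrite /T !mulmxA.
  by rewrite -/G -(mulmxA (W *m Gi) G Gi) /Gi mulmxV // mulmx1.
have Tkk : forall k, T k k = \sum_j d j * ((T j k)^* * T j k).
  move=> k; rewrite -{1}TDT mxE; apply: eq_bigr => j _.
  rewrite mxE (bigD1 j) //= big1 ?addr0; last first.
    by move=> i /negbTE ij; rewrite diagfE ij mulr0n mulr0.
  rewrite diagfE eqxx mulr1n -{1}hT hermE; ring.
have T0 : forall k, 0 <= T k k.
  move=> k; rewrite Tkk; apply: sumr_ge0 => j _; apply: mulr_ge0 => //.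
  by rewrite mulrC mul_conjC_ge0.
have T1 : forall k, d k * T k k <= 1.
  move=> k; have : d k * ((T k k)^* * T k k) <= T k k.
    rewrite [X in _ <= X]Tkk (bigD1 k) //= lerDl; apply: sumr_ge0 => j _.
    by apply: mulr_ge0 => //; rewrite mulrC mul_conjC_ge0.
  rewrite conj_Creal ?ger0_real //.
  have [->|Tk] := eqVneq (T k k) 0; first by rewrite !mulr0 => _; apply: ler01.
  have Tp : 0 < T k k by rewrite lt_def Tk T0.
  by rewrite mulrA -{3}(mul1r (T k k)) ler_pM2r.
have sL : \sum_k d k * T k k = L%:R.
  rewrite -tr_diagf_mul.
  have -> : diagf d *m T = diagf d *m W *m Gi *m herm W by rewrite /T !mulmxA.
  rewrite mxtrace_mulC !mulmxA -/G.
  have -> : herm W *m diagf d *m W *m Gi = G *m Gi by [].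
  by rewrite /Gi mulmxV // mxtrace1.
have W1 := weighted d0 dec dpos k0v L0 Lm T0 T1 sL.
rewrite tr_diagf_mul -/T.
have Z0 := tr_herm_ge0 (W - t *: (diagf (fun k => sqrtC (d k)) *m W *m Gi)).
rewrite lerD2r -[X in X <= _]add0r; apply: lerD => //.
by apply: ler_wpM2l => //; apply: mulr_ge0 => //; apply: ler0n.
Qed.
End O.

Section D.
Variable C : numClosedFieldType.

Lemma prim_exists n : (n > 0)%N -> exists z : C, n.-primitive_root z.
Proof.
pose p : {poly C} := 'X^n - 1; have [r Dp] := closed_field_poly_normal p.
move=> n_gt0; rewrite (monicP _) ?monicXnsubC // scale1r in Dp.
have rn1: all n.-unity_root r by apply/allP=> z; rewrite -root_prod_XsubC -Dp.
have sz_r: (n < (size r).+1)%N.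
  by rewrite -(size_prod_XsubC r id) -Dp size_XnsubC.
have [|z] := hasP (has_prim_root n_gt0 rn1 _ sz_r); last by exists z.
by rewrite -separable_prod_XsubC -Dp separable_Xn_sub_1 // pnatr_eq0 -lt0n.
Qed.

Lemma geom0 (z : C) n : z ^+ n = 1 -> z != 1 -> \sum_(k < n) z ^+ k = 0.
Proof.
move=> zn z1; have := subrX1 z n; rewrite zn subrr => /esym/eqP.
by rewrite mulf_eq0 subr_eq0 (negbTE z1) => /eqP.
Qed.

Lemma dft_exists L : (0 < L)%N ->
  exists S : 'M[C]_L, unitary S /\ (forall i j, (S i j)^* * S i j = L%:R^-1).
Proof.
move=> L0; have [w pw] := prim_exists L0.
have wL : w ^+ L = 1 := prim_expr_order pw.
have w0 : w != 0 by rewrite (prim_root_eq0 pw) -lt0n.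
have nw : `|w| = 1.
  by apply/eqP; rewrite -(pexpr_eq1 L0) // -normrX wL normr1.
have ww : w^* * w = 1 by rewrite mulrC -normCK nw expr1n.
have wc : w^* = w^-1 by rewrite -[w^*]mulr1 -(mulfV w0) mulrA ww mul1r.
have L0C : (L%:R : C) != 0 by rewrite pnatr_eq0 -lt0n.
set c := (sqrtC (L%:R : C))^-1.
have cc : c^* = c by apply: conj_Creal; rewrite /c realV; apply: sqrtC_real; apply: ler0n.
have c2 : c * c = L%:R^-1 by rewrite /c -invfM -expr2 sqrtCK.
pose S : 'M[C]_L := \matrix_(i, j) (c * w ^+ (i * j)%N).
have Sc : forall i j k : 'I_L, (S k i)^* * S k j = c * c * ((w^-1 ^+ i * w ^+ j) ^+ k).
  move=> i j k; rewrite !mxE rmorphM /= cc rmorphXn /= wc.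
  by rewrite exprMn -!exprM (mulnC i) (mulnC j) mulrACA.
exists S; split => [|i j]; last by rewrite Sc -exprMn mulVf // !expr1n mulr1 c2.
apply/matrixP=> i j; rewrite !mxE.
under eq_bigr => k _ do rewrite hermE Sc.
rewrite -mulr_sumr c2.
have [<-|ij] := eqVneq i j.
  rewrite -exprMn mulVf // expr1n.
  by rewrite (eq_bigr (fun _ => 1)) => [|k _]; rewrite ?expr1n // sumr_const card_ord mulVf.
rewrite geom0 ?mulr0 //.
  rewrite exprMn -!exprM (mulnC i) (mulnC j) !exprM exprVn wL invr1 !expr1n mulr1 //.
apply: contra ij => /eqP z1.
have : w ^+ i * (w^-1 ^+ i * w ^+ j) = w ^+ i * 1 by rewrite z1.
rewrite mulr1 mulrA -exprMn mulfV // expr1n mul1r.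
move/eqP; rewrite (eq_prim_root_expr pw) !modn_small // => /eqP e.
by apply/eqP; apply: val_inj.
Qed.

End D.

Section Mx.
Variable C : numClosedFieldType.

Lemma sum_delta m (w : 'I_m) (F : 'I_m -> C) : \sum_k (k == w)%:R * F k = F w.
Proof.
rewrite (bigD1 w) //= eqxx mul1r big1 ?addr0 // => k /negbTE ->; by rewrite mul0r.
Qed.

Lemma unitary_unit n (S : 'M[C]_n) (e : 'I_n -> C) : unitary S -> (forall i, e i != 0) ->
  S *m diagf e *m herm S \in unitmx.
Proof.
move=> hS e0.
have P : (S *m diagf e *m herm S) *m (S *m diagf (fun i => (e i)^-1) *m herm S) = 1%:M.
  rewrite !mulmxA -(mulmxA _ (herm S) S) hS mulmx1 -(mulmxA _ (diagf e)) diagf_mul.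
  rewrite (@eq_diagf _ _ _ (fun _ => 1)) => [|i]; last by rewrite mulfV.
  have -> : diagf (fun _ : 'I_n => (1 : C)) = 1%:M.
    by apply/matrixP => i j; rewrite diagfE !mxE.
  by rewrite mulmx1 unitary_sym.
by have [Gu _] := mulmx1_unit P.
Qed.

Lemma unitary_inv n (S : 'M[C]_n) (e : 'I_n -> C) : unitary S -> (forall i, e i != 0) ->
  invmx (S *m diagf e *m herm S) = S *m diagf (fun i => (e i)^-1) *m herm S.
Proof.
move=> hS e0; have SS := unitary_sym hS.
have P : (S *m diagf e *m herm S) *m (S *m diagf (fun i => (e i)^-1) *m herm S) = 1%:M.
  rewrite !mulmxA -(mulmxA _ (herm S) S) hS mulmx1 -(mulmxA _ (diagf e)) diagf_mul.
  rewrite (@eq_diagf _ _ _ (fun _ => 1)) => [|i]; last by rewrite mulfV.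
  have -> : diagf (fun _ : 'I_n => (1 : C)) = 1%:M.
    by apply/matrixP => i j; rewrite diagfE !mxE.
  by rewrite mulmx1.
have [Gu _] := mulmx1_unit P.
by rewrite -[RHS]mul1mx -(mulVmx Gu) -(mulmxA (invmx _)) P mulmx1.
Qed.

End Mx.

Unset Implicit Arguments. Set Strict Implicit. Set Printing Implicit Defensive.

Theorem proposition1 (C : numClosedFieldType) (NR M L n : nat)
  (sigma2 gamma : C) (H : 'M[C]_(NR, M))
  (lamH : 'I_L -> C) (V1 : 'M[C]_(M, L)) (nu : C) :
  0 < sigma2 -> 0 < gamma -> (1 <= n)%N ->
  (0 < L)%N -> (L <= \rank H)%N ->
  (forall l1 l2 : 'I_L, (l1 <= l2)%N -> lamH l2 <= lamH l1) ->
  (forall l : 'I_L, 0 < lamH l) ->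
  (exists (V : 'M[C]_M) (d : 'I_M -> C),
      unitary V /\
      herm H *m H = V *m diagf d *m herm V /\
      (forall i j : 'I_M, (i <= j)%N -> d j <= d i) /\
      (forall (l : 'I_L) (k : 'I_M), (k = l :> nat) ->
          lamH l = d k /\ col l V1 = col k V)) ->
  0 < nu ->
  (let lamU := fun l : 'I_L => sqrtC (nu * (sigma2 / lamH l)) in
   \sum_(l < L) sigma2 / (lamU l * lamH l) = gamma / n%:R) ->
  let lamU := fun l : 'I_L => sqrtC (nu * (sigma2 / lamH l)) in
  let Uopt := fun S : 'M[C]_L => V1 *m diagf (fun l => sqrtC (lamU l)) *m herm S in
  (forall S : 'M[C]_L, unitary S ->
     feasible sigma2 (gamma / n%:R) H (Uopt S) /\
     (forall U : 'M[C]_(M, L), feasible sigma2 (gamma / n%:R) H U ->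
        \tr (herm (Uopt S) *m Uopt S) <= \tr (herm U *m U)) /\
     \tr (herm (Uopt S) *m Uopt S) = \sum_(l < L) lamU l) /\
  (exists S : 'M[C]_L, unitary S /\
     forall l : 'I_L,
       sigma2 * (invmx (herm (Uopt S) *m herm H *m H *m Uopt S)) l l
         = (L%:R)^-1 * (gamma / n%:R)).
Proof.
move=> s0 g0 n1 L0 LrH lamdec lam0 [V [d [hV [hA [ddec hcol]]]]] nu0 hsum lamU Uopt.
have LM : (L <= M)%N := leq_trans LrH (rank_leq_col H).
set w := widen_ord LM.
have dw : forall l, d (w l) = lamH l by move=> l; case: (hcol l (w l) erefl).
pose E : 'M[C]_(M, L) := \matrix_(k, l) (k == w l)%:R.
have V1E : V1 = V *m E.
  apply/matrixP => i l; have [_ /colP/(_ i)] := hcol l (w l) erefl.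
  rewrite !mxE => ->; rewrite (eq_bigr (fun k => (k == w l)%:R * V i (w l))).
    by rewrite sum_delta.
  by move=> k _; rewrite mxE; case: eqP => [->|_]; rewrite ?mulr1 ?mulr0 ?mul1r ?mul0r.
have VV : V *m herm V = 1%:M := unitary_sym hV.
have winj : forall l l', (w l == w l') = (l == l').
  by move=> l l'; apply/eqP/eqP => [/(congr1 val) /= /val_inj|->].
have EE : herm E *m E = 1%:M.
  apply/matrixP => l l'; rewrite !mxE.
  rewrite (eq_bigr (fun k => (k == w l)%:R * (k == w l')%:R)); last first.
    by move=> k _; rewrite hermE !mxE conjC_nat.
  by rewrite sum_delta winj.
have EDE : herm E *m diagf d *m E = diagf lamH.
  apply/matrixP => l l'; rewrite -mulmxA mxE diagfE.
  rewrite (eq_bigr (fun k => (k == w l)%:R * (d k * (k == w l')%:R))); last first.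
    by move=> k _; rewrite hermE mul_diagf !mxE conjC_nat.
  by rewrite sum_delta winj dw mulr_natr.
have hd0 : forall k, 0 <= d k.
  move=> k.
  have : herm V *m (herm H *m H) *m V = diagf d.
    by rewrite hA !mulmxA hV mul1mx -mulmxA hV mulmx1.
  rewrite !mulmxA -(mulmxA _ H V) -herm_mul => /matrixP/(_ k k).
  rewrite diagfE eqxx mulr1n => <-; rewrite mxE; apply: sumr_ge0 => i _.
  by rewrite hermE mulrC mul_conjC_ge0.
have Gform : forall U : 'M[C]_(M, L), herm U *m herm H *m H *m U =
    herm (herm V *m U) *m diagf d *m (herm V *m U).
  move=> U; rewrite -(mulmxA (herm U)) hA herm_mul hermK !mulmxA.
  by [].
have Tform : forall U : 'M[C]_(M, L), \tr (herm U *m U) =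
    \tr (herm (herm V *m U) *m (herm V *m U)).
  by move=> U; rewrite herm_mul hermK !mulmxA -(mulmxA _ V) VV mulmx1.
have hs : \sum_(l < L) sigma2 / (lamU l * lamH l) = gamma / n%:R := hsum.
set t := sqrtC (nu * sigma2).
have t0 : 0 < t by rewrite sqrtC_gt0 mulr_gt0.
have lamH0 : forall l, lamH l != 0 by move=> l; rewrite gt_eqF.
have sH0 : forall l, sqrtC (lamH l) != 0 by move=> l; rewrite sqrtC_eq0.
have lamUt : forall l, lamU l = t / sqrtC (lamH l).
  move=> l; rewrite /lamU.
  have -> : nu * (sigma2 / lamH l) = (t / sqrtC (lamH l)) ^+ 2.
    by rewrite expr_div_n !sqrtCK; field.
  rewrite sqrCK //; apply: divr_ge0; [exact: ltW | rewrite sqrtC_ge0; exact: ltW (lam0 l)].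
have lamU0 : forall l, 0 < lamU l.
  by move=> l; rewrite lamUt divr_gt0 // sqrtC_gt0.
have lamU2 : forall l, lamU l ^+ 2 = nu * (sigma2 / lamH l) by move=> l; rewrite sqrtCK.
have nu0' : nu != 0 by rewrite gt_eqF.
have termU : forall l, nu * (sigma2 / (lamU l * lamH l)) = lamU l.
  move=> l; have u0 : lamU l != 0 by rewrite gt_eqF.
  have h2 := lamU2 l; move: u0 h2; set u := lamU l; clearbody u => u0 h2.
  have -> : sigma2 = u ^+ 2 * lamH l / nu.
    by rewrite h2; field; rewrite nu0' lamH0.
  by field; rewrite u0 lamH0 nu0'.
have sumU : nu * (gamma / n%:R) = \sum_l lamU l.
  by rewrite -hs mulr_sumr; apply: eq_bigr => l _; rewrite termU.
set Q := diagf (fun l => sqrtC (lamU l)).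
have hQ : herm Q = Q.
  rewrite /Q herm_diagf; apply: eq_diagf => l; apply: conj_Creal; apply: sqrtC_real.
  exact: ltW.
have QQ : Q *m Q = diagf lamU by rewrite /Q diagf_mul; apply: eq_diagf => l; rewrite -expr2 sqrtCK.
pose del := fun l => lamU l * lamH l.
have del0 : forall l, del l != 0 by move=> l; rewrite mulf_neq0 // gt_eqF.
have QDQ : Q *m diagf lamH *m Q = diagf del.
  rewrite diagf_mul /Q diagf_mul; apply: eq_diagf => l.
  by rewrite /del mulrAC -expr2 sqrtCK.
have WE : forall S, herm V *m Uopt S = E *m Q *m herm S.
  by move=> S; rewrite /Uopt V1E !mulmxA hV mul1mx.
have GoptE : forall S, herm (Uopt S) *m herm H *m H *m Uopt S = S *m diagf del *m herm S.
  move=> S; rewrite Gform WE !herm_mul hermK hQ.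
  have -> : S *m (Q *m herm E) *m diagf d *m (E *m Q *m herm S) =
     S *m (Q *m (herm E *m diagf d *m E) *m Q) *m herm S by rewrite !mulmxA.
  by rewrite EDE QDQ.
have entry : forall (S : 'M[C]_L) (e : 'I_L -> C) l,
    (S *m diagf e *m herm S) l l = \sum_j e j * (S l j * (S l j)^*).
  move=> S e l; rewrite mxE; apply: eq_bigr => j _.
  by rewrite hermE /diagf mul_mx_diag !mxE; ring.
have trS : forall (S : 'M[C]_L) (e : 'I_L -> C), unitary S ->
    \tr (S *m diagf e *m herm S) = \sum_j e j.
  move=> S e hS; rewrite mxtrace_mulC mulmxA hS mul1mx /mxtrace.
  by apply: eq_bigr => j _; rewrite diagfE eqxx mulr1n.
have trU : forall S, unitary S -> \tr (herm (Uopt S) *m Uopt S) = \sum_l lamU l.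
  move=> S hS; rewrite Tform WE !herm_mul hermK hQ.
  have -> : S *m (Q *m herm E) *m (E *m Q *m herm S) = S *m diagf lamU *m herm S.
    by rewrite -QQ !mulmxA -(mulmxA _ (herm E) E) EE mulmx1.
  exact: trS.
have Gunit : forall S, unitary S -> S *m diagf del *m herm S \in unitmx.
  by move=> S hS; apply: unitary_unit.
have Ginv : forall S, unitary S -> invmx (S *m diagf del *m herm S) =
    S *m diagf (fun l => (del l)^-1) *m herm S.
  by move=> S hS; apply: unitary_inv.
have sumGi : forall S, unitary S ->
    \sum_l sigma2 * (invmx (S *m diagf del *m herm S)) l l = gamma / n%:R.
  move=> S hS; rewrite -mulr_sumr Ginv //.
  rewrite -[X in _ * X]/(\tr _) trS // mulr_sumr -hs.
  by apply: eq_bigr.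
split.
  move=> S hS; split.
    by rewrite /feasible GoptE; split; [exact: Gunit | rewrite sumGi].
  split; last exact: trU.
  move=> U [Gu Hc]; rewrite trU // Tform.
  move: Gu Hc; rewrite /feasible Gform.
  set W := herm V *m U => Gu Hc.
  have k0lt : (L.-1 < M)%N by rewrite (leq_trans _ LM) // prednK.
  pose k0 : 'I_M := Ordinal k0lt.
  have dpos : forall k : 'I_M, (k < L)%N -> 0 < d k.
    by move=> k kL; have [<- _] := hcol (Ordinal kL) k erefl; exact: lam0.
  have O := @optW C M L W d k0 t hd0 ddec dpos (erefl (L.-1)) L0 LM (ltW t0) Gu.
  apply: le_trans O.
  rewrite (@big_ord_narrow _ _ _ L M (fun k => (sqrtC (d k))^-1) LM) /=.
  have e : \sum_(i < L) (sqrtC (d (w i)))^-1 = \sum_l lamU l / t.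
    apply: eq_bigr => l _; rewrite dw lamUt; field; by rewrite sH0 gt_eqF.
  rewrite -/w e.
  rewrite -mulr_suml.
  set A := \sum_l lamU l.
  set g := \tr _.
  have hg : sigma2 * g <= gamma / n%:R by rewrite /g /mxtrace mulr_sumr.
  have tg : t ^+ 2 * g <= A.
    by rewrite sqrtCK /A -sumU -mulrA ler_pM2l.
  have -> : 2%:R * t * (A / t) = A + A by field; rewrite gt_eqF.
  by rewrite -addrA lerDl subr_ge0.
have [S [hS hSe]] := dft_exists C L0.
exists S; split => // l.
rewrite GoptE Ginv // entry.
rewrite (eq_bigr (fun j => (del j)^-1 * L%:R^-1)) => [|j _]; last by rewrite [S l j * _]mulrC hSe.
rewrite -mulr_suml -hs -mulr_sumr /del; ring.
Qed.
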